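(* Let $m\ge 1$ and let $\mathbf a=(a_1,\dots,a_m)$ be an admissible sequence. For a nonnegative integer $x$ define the $m\times m$ matrices $$\mathbf m(\mathbf a,x)=\left(\frac{(q^{2i+2x};q^2)_{a_j+1-2i}}{(q;q)_{a_j+1-2i}}\right)_{i,j=1}^m,\qquad \mathbf s(\mathbf a)=\left(\frac{1}{(q;q)_{a_j+1-2i}}\right)_{i,j=1}^m,$$ where in both matrices the $(i,j)$-entry is defined to be $0$ whenever $a_j+1-2i<0$. Then, as an identity of rational functions in $q$, $$\det \mathbf m(\mathbf a,x)=\left(\prod_{k=1}^m (q^{2x+2k};q)_{a_k-2k+1}\right)\det \mathbf s(\mathbf a).$$
   Context: $q$ is an indeterminate. For integers $n\ge 0$, $(a;q)_n=\prod_{j=0}^{n-1}(1-aq^j)$ (so $(a;q)_0=1$). A finite sequence of integers $\mathbf a=(a_1,\dots,a_m)$ is called admissible if it is strictly increasing and $2i-1\le a_i\le 2m$ for all $1\le i\le m$. *)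

(* Defs.v *)
From HB Require Import structures.
From mathcomp Require Import all_boot all_order all_algebra.
Set Implicit Arguments. Unset Strict Implicit. Unset Printing Implicit Defensive.
Import Order.TTheory GRing.Theory Num.Theory.
Local Open Scope ring_scope.

Definition RF := {fraction {poly rat}}.
Definition qv : RF := tofrac ('X : {poly rat}).

Definition qpoch (a b : RF) (n : nat) : RF := \prod_(j < n) (1 - a * b ^+ j).

(* Admissible sequence a = (a_1,...,a_m), stored 0-indexed as a : 'I_m -> int:
   strictly increasing and 2i-1 <= a_i <= 2m for 1 <= i <= m. *)
Definition admissible (m : nat) (a : 'I_m -> int) : Prop :=
  (forall i j : 'I_m, (i < j)%N -> a i < a j) /\
  (forall i : 'I_m, (2 * (i.+1)%:Z - 1 <= a i) /\ (a i <= 2 * m%:Z)).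

(* Exponent a_j + 1 - 2i with 1-based indices i = i0+1, j = j0+1. *)
Definition expo (m : nat) (a : 'I_m -> int) (i j : 'I_m) : int :=
  a j + 1 - 2 * (i.+1)%:Z.

Definition mmat (m : nat) (a : 'I_m -> int) (x : nat) : 'M[RF]_m :=
  \matrix_(i < m, j < m)
    (if expo a i j < 0 then 0
     else qpoch (qv ^+ (2 * i.+1 + 2 * x)) (qv ^+ 2) (absz (expo a i j))
          / qpoch qv qv (absz (expo a i j))).

Definition smat (m : nat) (a : 'I_m -> int) : 'M[RF]_m :=
  \matrix_(i < m, j < m)
    (if expo a i j < 0 then 0 else (qpoch qv qv (absz (expo a i j)))^-1).

(* Main.v *)
Require Import Defs.
From HB Require Import structures.
From mathcomp Require Import all_boot all_order all_algebra.
From mathcomp Require Import ring zify.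
Import Order.TTheory GRing.Theory Num.Theory.
Local Open Scope ring_scope.

Definition P := {poly RF}.
Definition Q : P := qv%:P.

Definition qp {R : comNzRingType} (a b : R) (n : nat) : R := \prod_(j < n) (1 - a * b ^+ j).

Lemma qpS {R : comNzRingType} (a b : R) n : qp a b n.+1 = (1 - a) * qp (a * b) b n.
Proof.
rewrite /qp big_ord_recl /= expr0 mulr1; congr (_ * _).
by apply: eq_bigr => j _; rewrite /bump /= exprS mulrA.
Qed.

Lemma qpSr {R : comNzRingType} (a b : R) n : qp a b n.+1 = qp a b n * (1 - a * b ^+ n).
Proof. by rewrite /qp big_ord_recr. Qed.

Lemma qp_0 {R : comNzRingType} (a b : R) : qp a b 0 = 1.
Proof. by rewrite /qp big_ord0. Qed.

Lemma gen_step {R : comNzRingType} (w Q : R) (K : nat -> R) n :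
  (forall p, K p = K p.+2 * ((1 - Q ^+ p.+1) * (1 - Q ^+ p.+2))) ->
  qp w (Q ^+ 2) n * K n * ((1 - w * Q ^+ n) * (1 - w * Q ^+ n.+1)) =
  (1 - w) * (1 - w * Q) * (qp (w * Q ^+ 2) (Q ^+ 2) n * K n) +
  (1 - w) * (1 - w * Q ^+ 2) * (w * Q) *
  (if (n < 2)%N then 0 else qp (w * Q ^+ 2 * Q ^+ 2) (Q ^+ 2) (n - 2)%N * K (n - 2)%N).
Proof.
move=> hK; case: n => [|[|p]] /=.
- rewrite !qp_0 expr0 expr1 mulr1. ring.
- rewrite !qpS !qp_0 expr1 expr2. ring.
- rewrite subn2 /= [qp (w * _) _ p.+2]qpSr !qpS (hK p).
  have -> : Q ^+ p.+2 = Q ^+ p * Q ^+ 2 by rewrite -exprD addnC.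
  have -> : Q ^+ p.+3 = Q ^+ p * Q ^+ 3 by rewrite -exprD addnC.
  have -> : Q ^+ p.+1 = Q ^+ p * Q by rewrite exprSr.
  have -> : (Q ^+ 2) ^+ p.+1 = Q ^+ p * Q ^+ p * Q ^+ 2.
    by rewrite exprSr -exprM mulnC exprM expr2.
  move: (qp _ _ p) (K p.+2) (Q ^+ p) => B C t.
  ring.
Qed.

Lemma qv_pow_neq1 k : (0 < k)%N -> qv ^+ k != 1.
Proof.
move=> k0; rewrite /qv -tofracXn -tofrac1 tofrac_eq.
apply/eqP => /(congr1 (fun p : {poly rat} => size p)).
by rewrite size_polyXn size_poly1; case: k k0.
Qed.

Lemma one_sub_qv_neq0 k : (0 < k)%N -> 1 - qv ^+ k != 0.
Proof. by move=> k0; rewrite subr_eq0 eq_sym qv_pow_neq1. Qed.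

Definition iq (n : nat) : RF := (qpoch qv qv n)^-1.

Lemma qpoch_qp n : qpoch qv qv n = qp qv qv n. Proof. by []. Qed.

Lemma iqSS p : iq p = iq p.+2 * ((1 - qv ^+ p.+1) * (1 - qv ^+ p.+2)).
Proof.
rewrite /iq !qpoch_qp !qpSr -!exprS.
have h1 := @one_sub_qv_neq0 p.+1 (ltn0Sn p); have h2 := @one_sub_qv_neq0 p.+2 (ltn0Sn p.+1).
move: h1 h2; set u1 := 1 - _; set u2 := 1 - _; set A := qp _ _ _ => h1 h2.
rewrite !invfM -!mulrA.
rewrite [u2^-1 * _]mulrCA (mulVf h2) mulr1 (mulVf h1) mulr1.
reflexivity.

Qed.

Lemma hKP p : (iq p)%:P = (iq p.+2)%:P * ((1 - Q ^+ p.+1) * (1 - Q ^+ p.+2)) :> P.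
Proof. by rewrite iqSS !rmorphM !rmorphB !rmorph1 !rmorphXn. Qed.

Definition G (z : P) (i A : nat) : P :=
  if (A.+1 < 2 * i)%N then 0
  else qp (z * Q ^+ (2 * i)) (Q ^+ 2) (A.+1 - 2 * i) * (iq (A.+1 - 2 * i))%:P.
Definition cc (z : P) (A : nat) : P := (1 - z * Q ^+ A.+1) * (1 - z * Q ^+ A.+2).
Definition al (z : P) (i : nat) : P := (1 - z * Q ^+ (2 * i)) * (1 - z * Q ^+ (2 * i).+1).
Definition be (z : P) (i : nat) : P :=
  (1 - z * Q ^+ (2 * i)) * (1 - z * Q ^+ (2 * i).+2) * (z * Q ^+ (2 * i).+1).

Lemma Gstep z i A :
  G z i A * cc z A = al z i * G (z * Q ^+ 2) i A + be z i * G (z * Q ^+ 2) i.+1 A.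
Proof.
rewrite /G; case: ltnP => h.
  have -> : (A.+1 < 2 * i.+1)%N by lia.
  by rewrite !mul0r !mulr0 addr0.
set n := (A.+1 - 2 * i)%N.
have hA : A.+1 = (n + 2 * i)%N by rewrite /n; lia.
have -> : (A.+1 < 2 * i.+1)%N = (n < 2)%N by rewrite /n; lia.
have -> : (A.+1 - 2 * i.+1)%N = (n - 2)%N by rewrite /n; lia.
rewrite /cc /al /be.
have -> : z * Q ^+ 2 * Q ^+ (2 * i) = z * Q ^+ (2 * i) * Q ^+ 2 by rewrite mulrAC.
have -> : z * Q ^+ 2 * Q ^+ (2 * i.+1) = z * Q ^+ (2 * i) * Q ^+ 2 * Q ^+ 2.
  rewrite -!mulrA; congr (_ * _); rewrite -!exprS -exprD; congr (_ ^+ _); lia.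
have -> : z * Q ^+ A.+1 = z * Q ^+ (2 * i) * Q ^+ n by rewrite -mulrA -exprD; congr (_ * _ ^+ _); lia.
have -> : z * Q ^+ A.+2 = z * Q ^+ (2 * i) * Q ^+ n.+1 by rewrite -mulrA -exprD; congr (_ * _ ^+ _); lia.
have -> : z * Q ^+ (2 * i).+1 = z * Q ^+ (2 * i) * Q by rewrite exprSr mulrA.
have -> : z * Q ^+ (2 * i).+2 = z * Q ^+ (2 * i) * Q ^+ 2 by rewrite -mulrA -exprD addn2.
move: n hA => n _.
exact: (gen_step (z * Q ^+ (2 * i)) Q (fun n => (iq n)%:P) n hKP).
Qed.

Lemma sum2 {R : comNzRingType} (m i : nat) (al be : R) (F : nat -> R) :
  \sum_(k < m) (if (k == i :> nat) then al else if (k == i.+1 :> nat) then be else 0) * F k =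
  (if (i < m)%N then al * F i else 0) + (if (i.+1 < m)%N then be * F i.+1 else 0).
Proof.
elim: m => [|m IH]; first by rewrite big_ord0 addr0.
rewrite big_ord_recr /= IH !ltnS.
case: (ltngtP i.+1 m) => h.
- have -> : (i <= m)%N by lia.
  have -> : (m == i) = false by apply/eqP; lia.
  by rewrite mul0r addr0.
- case: (eqVneq m i) => [->|hmi]; first by rewrite leqnn !add0r addr0.
  have -> : (i <= m)%N = false by lia.
  by rewrite mul0r !addr0.
- have -> : (i <= m)%N by lia.
  have -> : (m == i) = false by apply/eqP; lia.
  by rewrite addr0 h.
Qed.

Section Mat.
Variables (m : nat) (b : 'I_m -> nat).

Definition Mz (z : P) : 'M[P]_m := \matrix_(i < m, j < m) G z i.+1 (b j).
Definition Lm (z : P) : 'M[P]_m :=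
  \matrix_(i < m, k < m) (if (k == i :> nat) then al z i.+1
                          else if (k == i.+1 :> nat) then be z i.+1 else 0).
Definition Cz (z : P) : P := \prod_(j < m) cc z (b j).
Definition Lz (z : P) : P := \prod_(i < m) al z i.+1.

Lemma Mstep z : (forall j, (b j <= 2 * m)%N) ->
  Mz z *m diag_mx (\row_j cc z (b j)) = Lm z *m Mz (z * Q ^+ 2).
Proof.
move=> hb; apply/matrixP => i j; rewrite mul_mx_diag !mxE.
under eq_bigr do rewrite !mxE.
rewrite (sum2 m i (al z i.+1) (be z i.+1) (fun k => G (z * Q ^+ 2) k.+1 (b j))) ltn_ord.
rewrite Gstep; congr (_ + _).
case: ifP => // /negbT; rewrite -leqNgt => hi.
rewrite /G ifT ?mulr0 //.
have := hb j; have := ltn_ord i; lia.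
Qed.

Lemma detLm z : \det (Lm z) = Lz z.
Proof.
rewrite -det_tr det_trig; last first.
  apply/is_trig_mxP => i j hij; rewrite !mxE.
  have -> : (i == j :> nat) = false by apply/eqP; lia.
  have -> : (i == j.+1 :> nat) = false by apply/eqP; lia.
  by [].
by apply: eq_bigr => i _; rewrite !mxE eqxx.
Qed.

Lemma detstep z : (forall j, (b j <= 2 * m)%N) ->
  \det (Mz z) * Cz z = Lz z * \det (Mz (z * Q ^+ 2)).
Proof.
move=> hb; rewrite -detLm -det_mulmx -Mstep // det_mulmx det_diag.
by congr (_ * _); apply: eq_bigr => j _; rewrite mxE.
Qed.
End Mat.

Lemma coef_comp_scale {F : fieldType} (p : {poly F}) (c : F) n :
  (p \Po ('X * c%:P))`_n = p`_n * c ^+ n.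
Proof.
rewrite coef_comp_poly.
under eq_bigr => i _ do rewrite exprMn -rmorphXn coefMC coefXn mulrA.
case: (ltnP n (size p)) => hn.
  rewrite (bigD1 (Ordinal hn)) //= eqxx mulr1 big1 ?addr0 // => i /eqP hi.
  have -> : (n == i) = false by apply/eqP => e; apply: hi; apply: val_inj.
  by rewrite mulr0 mul0r.
rewrite big1 ?nth_default ?mul0r // => i _.
have -> : (n == i) = false by apply/eqP => e; have := ltn_ord i; lia.
by rewrite mulr0 mul0r.
Qed.

Lemma uniq_poly {F : fieldType} (h C L : {poly F}) (c : F) :
  C`_0 = 1 -> L`_0 = 1 -> h`_0 = 0 -> (forall d, (0 < d)%N -> c ^+ d != 1) ->
  h * C = L * (h \Po ('X * c%:P)) -> h = 0.
Proof.
move=> C0 L0 h0 hc E.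
suff H : forall d k, (k <= d)%N -> h`_k = 0.
  by apply/polyP => k; rewrite coef0 (H k k (leqnn k)).
elim=> [|d IH] k hk; first by have -> : k = 0%N by lia.
case: (ltnP k d.+1) => hk'; first by apply: IH; lia.
have -> : k = d.+1 by lia.
move: E => /(congr1 (fun p : {poly F} => p`_d.+1)) /=; rewrite !coefM => e.
have e1 : (h * C)`_d.+1 = h`_d.+1.
  rewrite coefM big_ord_recr /= subnn C0 mulr1 big1 ?add0r //.
  by move=> i _; rewrite IH ?mul0r //; have := ltn_ord i; lia.
have e2 : (L * (h \Po ('X * c%:P)))`_d.+1 = h`_d.+1 * c ^+ d.+1.
  rewrite coefM big_ord_recl /= subn0 L0 mul1r coef_comp_scale big1 ?addr0 //.
  move=> i _; rewrite /bump /= coef_comp_scale IH ?mul0r ?mulr0 //; have := ltn_ord i; lia.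
rewrite -!coefM e1 e2 in e.
have : h`_d.+1 * (1 - c ^+ d.+1) = 0 by rewrite mulrBr mulr1 -e subrr.
move/eqP; rewrite mulf_eq0 subr_eq0 [1 == _]eq_sym (negbTE (hc _ (ltn0Sn d))) orbF.
by move/eqP.
Qed.

Lemma qp_zero {R : comNzRingType} (c : R) n : qp 0 c n = 1.
Proof. by rewrite /qp big1 // => j _; rewrite mul0r subr0. Qed.

Lemma compqp (a c y : P) n : (qp a c n) \Po y = qp (a \Po y) (c \Po y) n.
Proof.
rewrite /qp rmorph_prod; apply: eq_bigr => j _.
by rewrite rmorphB rmorph1 rmorphM rmorphXn /=.
Qed.

Lemma compQ (y : P) k : (Q ^+ k) \Po y = Q ^+ k.
Proof. by rewrite rmorphXn /= /Q comp_polyC. Qed.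

Lemma compXQ (y : P) k : ('X * Q ^+ k) \Po y = y * Q ^+ k.
Proof. by rewrite [LHS]rmorphM /= comp_polyX compQ. Qed.

Lemma compG y i A : G 'X i A \Po y = G y i A.
Proof.
rewrite /G; case: ifP => _; first by rewrite rmorph0.
by rewrite rmorphM /= compqp rmorphM /= comp_polyX !compQ comp_polyC.
Qed.

Lemma qpC (a c : RF) n : qp a%:P c%:P n = (qp a c n)%:P.
Proof.
rewrite /qp rmorph_prod; apply: eq_bigr => j _.
by rewrite rmorphB rmorph1 rmorphM rmorphXn /=.
Qed.

Lemma qp_gen2 {R : comNzRingType} (w q : R) n :
  qp w q n * ((1 - w * q ^+ n) * (1 - w * q ^+ n.+1)) = (1 - w) * (1 - w * q) * qp (w * q ^+ 2) q n.
Proof.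
have -> : qp w q n * ((1 - w * q ^+ n) * (1 - w * q ^+ n.+1)) = qp w q n.+2 by rewrite !qpSr mulrA.
by rewrite !qpS mulrA expr2 [w * (q * q)]mulrA.
Qed.

Section Main.
Variables (m : nat) (b : 'I_m -> nat).

Definition Pk (z : P) : P := \prod_(k < m) qp (z * Q ^+ (2 * k.+1)) Q ((b k).+1 - 2 * k.+1).

Lemma Pkstep z : (forall k : 'I_m, (2 * k.+1 <= (b k).+1)%N) ->
  Pk z * Cz m b z = Lz m z * Pk (z * Q ^+ 2).
Proof.
move=> hb; rewrite /Pk /Cz /Lz -!big_split /=; apply: eq_bigr => k _.
set n := ((b k).+1 - 2 * k.+1)%N.
have hA : (b k).+1 = (n + 2 * k.+1)%N by rewrite /n; have := hb k; lia.
rewrite /cc /al.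
have -> : z * Q ^+ (b k).+1 = z * Q ^+ (2 * k.+1) * Q ^+ n by rewrite -mulrA -exprD; congr (_ * _ ^+ _); lia.
have -> : z * Q ^+ (b k).+2 = z * Q ^+ (2 * k.+1) * Q ^+ n.+1 by rewrite -mulrA -exprD; congr (_ * _ ^+ _); lia.
have -> : z * Q ^+ (2 * k.+1).+1 = z * Q ^+ (2 * k.+1) * Q by rewrite exprSr mulrA.
have -> : z * Q ^+ 2 * Q ^+ (2 * k.+1) = z * Q ^+ (2 * k.+1) * Q ^+ 2 by rewrite mulrAC.
exact: qp_gen2.
Qed.

Lemma compMz y : map_mx (comp_poly y) (Mz m b 'X) = Mz m b y.
Proof. by apply/matrixP => i j; rewrite !mxE compG. Qed.

Lemma compdet y : \det (Mz m b 'X) \Po y = \det (Mz m b y).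
Proof. by rewrite -det_map_mx compMz. Qed.

Lemma compPk y : Pk 'X \Po y = Pk y.
Proof.
rewrite /Pk rmorph_prod; apply: eq_bigr => k _.
by rewrite /= compqp rmorphM /= comp_polyX !compQ /Q comp_polyC.
Qed.

Lemma compCz y : Cz m b 'X \Po y = Cz m b y.
Proof.
rewrite /Cz rmorph_prod; apply: eq_bigr => k _.
by rewrite /cc rmorphM !rmorphB !rmorph1 /= !compXQ.
Qed.

Lemma compLz y : Lz m 'X \Po y = Lz m y.
Proof.
rewrite /Lz rmorph_prod; apply: eq_bigr => k _.
by rewrite /al rmorphM !rmorphB !rmorph1 /= !compXQ.
Qed.

Definition S0 : 'M[RF]_m := \matrix_(i < m, j < m)
  (if ((b j).+1 < 2 * i.+1)%N then 0 else iq ((b j).+1 - 2 * i.+1)).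

Lemma Mz0 : Mz m b 0 = map_mx polyC S0.
Proof.
apply/matrixP => i j; rewrite !mxE /G; case: ifP => _; first by rewrite rmorph0.
by rewrite mul0r qp_zero mul1r.
Qed.

Lemma coef0_const (p : P) (c : P) : p \Po 0 = c -> (p`_0)%:P = c.
Proof. by rewrite comp_poly0r. Qed.

Lemma main_poly : (forall j, (b j <= 2 * m)%N) -> (forall k : 'I_m, (2 * k.+1 <= (b k).+1)%N) ->
  \det (Mz m b 'X) = Pk 'X * (\det S0)%:P.
Proof.
move=> hb hb2; apply/eqP; rewrite -subr_eq0; apply/eqP.
set h := _ - _.
have hQ : 'X * Q ^+ 2 = 'X * (qv ^+ 2)%:P by rewrite rmorphXn.
apply: (@uniq_poly _ h (Cz m b 'X) (Lz m 'X) (qv ^+ 2)).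
- apply: polyC_inj; apply: coef0_const; rewrite compCz /Cz big1; first reflexivity.
  move=> j _; rewrite /cc !mul0r subr0 mulr1; reflexivity.
- apply: polyC_inj; apply: coef0_const; rewrite compLz /Lz big1; first reflexivity.
  move=> j _; rewrite /al !mul0r subr0 mulr1; reflexivity.
- apply: polyC_inj; apply: coef0_const.
  rewrite /h rmorphB rmorphM /= compdet compPk comp_polyC Mz0 det_map_mx /Pk big1.
    rewrite mul1r subrr. reflexivity.
  move=> k _; rewrite mul0r qp_zero; reflexivity.
- move=> d hd; rewrite -exprM; apply: qv_pow_neq1. lia.
- rewrite -hQ /h rmorphB rmorphM /= compdet compPk comp_polyC.
  rewrite mulrBl mulrBr (@detstep m b 'X hb); congr (_ - _).
  rewrite mulrAC (Pkstep 'X hb2) -[LHS]mulrA; reflexivity.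
Qed.
End Main.

Lemma int_lt (A : int) (i : nat) : 0 <= A ->
  ((A + 1 - 2 * (i%:Z) < 0)%R = ((absz A).+1 < 2 * i)%N).
Proof. move=> h; lia. Qed.

Lemma int_abs (A : int) (i : nat) : 0 <= A -> (2 * i <= (absz A).+1)%N ->
  (absz (A + 1 - 2 * (i%:Z))%R = ((absz A).+1 - 2 * i)%N).
Proof.
move=> h1 h2.
have -> : (A + 1 - 2 * (i%:Z))%R = (((absz A).+1 - 2 * i)%N)%:Z by lia.
by [].
Qed.

Lemma HQ2 : Q ^+ 2 = (qv ^+ 2)%:P.
Proof. rewrite /Q polyC_exp; reflexivity. Qed.

Lemma HM (m : nat) (a : 'I_m -> int) (x : nat) : (forall j, 0 <= a j) ->
  Mz m (fun j => absz (a j)) (qv ^+ (2 * x))%:P = map_mx polyC (mmat a x).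
Proof.
move=> ha; apply/matrixP => i j; rewrite !mxE /G /expo (@int_lt _ _ (ha j)).
case: ifP => hc; first exact: (esym (rmorph0 _)).
rewrite (@int_abs _ _ (ha j)); last by rewrite leqNgt hc.
have Hw : (qv ^+ (2 * x))%:P * Q ^+ (2 * i.+1) = (qv ^+ (2 * i.+1 + 2 * x))%:P.
  by rewrite /Q -polyC_exp -polyCM -exprD; congr (_ %:P); congr (_ ^+ _); lia.
rewrite Hw HQ2 qpC -polyCM; congr (_ %:P).
Qed.

Lemma HS (m : nat) (a : 'I_m -> int) : (forall j, 0 <= a j) ->
  S0 m (fun j => absz (a j)) = smat a.
Proof.
move=> ha; apply/matrixP => i j; rewrite !mxE /expo (@int_lt _ _ (ha j)).
case: ifP => hc; first reflexivity.
rewrite (@int_abs _ _ (ha j)); last by rewrite leqNgt hc.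
reflexivity.
Qed.

Lemma HP (m : nat) (a : 'I_m -> int) (x : nat) : (forall j, 0 <= a j) ->
  (forall k : 'I_m, (2 * k.+1 <= (absz (a k)).+1)%N) ->
  Pk m (fun j => absz (a j)) (qv ^+ (2 * x))%:P =
    (\prod_(k < m) qpoch (qv ^+ (2 * x + 2 * k.+1)) qv (absz (a k - 2 * (k.+1)%:Z + 1)))%:P.
Proof.
move=> ha hb2; rewrite /Pk rmorph_prod; apply: eq_bigr => k _.
have -> : a k - 2 * (k.+1)%:Z + 1 = a k + 1 - 2 * (k.+1)%:Z by lia.
rewrite (@int_abs _ _ (ha k) (hb2 k)).
have Hw : (qv ^+ (2 * x))%:P * Q ^+ (2 * k.+1) = (qv ^+ (2 * x + 2 * k.+1))%:P.
  by rewrite /Q -polyC_exp -polyCM -exprD.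
rewrite Hw /Q qpC; reflexivity.
Qed.

Theorem theorem1 (m : nat) (a : 'I_m -> int) (x : nat) :
  (0 < m)%N -> admissible a ->
  \det (mmat a x) =
    (\prod_(k < m)
       qpoch (qv ^+ (2 * x + 2 * k.+1)) qv (absz (a k - 2 * (k.+1)%:Z + 1)))
    * \det (smat a).
Proof.
move=> _ [_ hadm].
have ha : forall j, 0 <= a j by move=> j; have := hadm j; lia.
have hb : forall j, (absz (a j) <= 2 * m)%N by move=> j; have := hadm j; lia.
have hb2 : forall k : 'I_m, (2 * k.+1 <= (absz (a k)).+1)%N by move=> k; have := hadm k; lia.
have E := @main_poly m (fun j => absz (a j)) hb hb2.
have E2 := congr1 (comp_poly (qv ^+ (2 * x))%:P) E.
rewrite /= compdet rmorphM /= compPk comp_polyC in E2.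
rewrite (@HM m a x ha) (@HS m a ha) (@HP m a x ha hb2) det_map_mx /= -rmorphM in E2.
exact: (polyC_inj E2).
Qed.
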